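(* Let $c>1$ be an irrational number, let $f(n)=[c^{-1}(n+1)]-[c^{-1}n]$ (the indicator function of $\{[cj]:j\ge1\}$), and for a positive integer $m$ let $x=[mc]$. Then, as $m\to\infty$, $$\sum_{n=1}^x \frac{f(n)}{n} = \frac{1}{c}+ \frac{1}{c}(\log m + \log c + \gamma) -\sum_{n=1}^\infty \frac{\{c^{-1}(n+1)\}}{n(n+1)} + O\left(\frac{1}{m}\right),$$ where $\gamma$ is Euler's constant.
   Context: $[x]$ is the greatest integer not exceeding $x$ and $\{x\}=x-[x]$. *)

(* Defs.v *)
From Stdlib Require Import Reals Lra ZArith QArith.
From Coquelicot Require Import Coquelicot.
Open Scope R_scope.

(* [x] = greatest integer not exceeding x (Stdlib Int_part), {x} = x - [x] (frac_part). *)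
Definition floorR (x : R) : R := IZR (Int_part x).

Definition irrational (c : R) : Prop := ~ exists q : Q, c = Q2R q.

Definition fB (c : R) (n : nat) : R :=
  floorR (/ c * (INR n + 1)) - floorR (/ c * INR n).

Definition harmonic (n : nat) : R := sum_n_m (fun k => / INR k) 1 n.

Definition euler_gamma : R := real (Lim_seq (fun n => harmonic n - ln (INR n))).

Definition lhs_sum (c : R) (m : nat) : R :=
  sum_n_m (fun n => fB c n / INR n) 1 (Z.to_nat (Int_part (INR m * c))).

(* sum_{n=1}^oo {c^{-1}(n+1)} / (n(n+1)), reindexed from k = n - 1 >= 0 *)
Definition frac_series (c : R) : R :=
  Series (fun k : nat => frac_part (/ c * (INR k + 2)) / ((INR k + 1) * (INR k + 2))).

(* Main.v *)
Require Import Defs.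
From Stdlib Require Import Reals Lra Lia ZArith QArith.
From Coquelicot Require Import Coquelicot.
Open Scope R_scope.

Lemma ln1p_le (y : R) : -1 < y -> ln (1 + y) <= y.
Proof.
  intros H. rewrite <- (ln_exp y) at 2. apply ln_le; [lra|apply exp_ineq1_le].
Qed.

Lemma harm_S n : harmonic (S n) = harmonic n + / INR (S n).
Proof.
  unfold harmonic. rewrite sum_n_Sm; [reflexivity|lia].
Qed.

Lemma harm_1 : harmonic 1 = 1.
Proof. unfold harmonic. rewrite sum_n_n. simpl. lra. Qed.

Definition uu (n : nat) : R := harmonic (S n) - ln (INR (S n)).
Definition vv (n : nat) : R := harmonic (S n) - ln (INR (S n) + 1).

Lemma INRS_pos n : 0 < INR (S n).
Proof. apply lt_0_INR; lia. Qed.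

Lemma ln_step n : / (INR (S n) + 1) <= ln (INR (S n) + 1) - ln (INR (S n))
                  /\ ln (INR (S n) + 1) - ln (INR (S n)) <= / INR (S n).
Proof.
  pose proof (INRS_pos n) as Hp. set (t := INR (S n)) in *.
  split.
  - assert (ln (t / (t+1)) <= - / (t+1)).
    { replace (t/(t+1)) with (1 + - / (t+1)) by (field; lra).
      apply ln1p_le. assert (0 < /(t+1)) by (apply Rinv_0_lt_compat; lra).
      assert (/(t+1) < 1). { rewrite <- Rinv_1. apply Rinv_lt_contravar; lra. } lra. }
    unfold Rdiv in H. rewrite ln_mult in H; [|lra|apply Rinv_0_lt_compat; lra].
    rewrite ln_Rinv in H; lra.
  - replace (t+1) with (t * (1 + /t)) by (field; lra).
    rewrite ln_mult; [|lra|]. 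
    + pose proof (ln1p_le (/t)). assert (0 < /t) by (apply Rinv_0_lt_compat; lra). lra.
    + assert (0 < /t) by (apply Rinv_0_lt_compat; lra). lra.
Qed.

Lemma uu_decr n : uu (S n) <= uu n.
Proof.
  unfold uu. rewrite harm_S. rewrite (S_INR (S n)).
  destruct (ln_step n). lra.
Qed.

Lemma vv_incr n : vv n <= vv (S n).
Proof.
  unfold vv. rewrite (harm_S (S n)). rewrite (S_INR (S n)).
  destruct (ln_step (S n)) as [A B]. rewrite (S_INR (S n)) in A, B. lra.
Qed.

Lemma vv_le_uu n : vv n <= uu n.
Proof. unfold uu, vv. destruct (ln_step n). pose proof (INRS_pos n). assert (0 < /(INR (S n)+1)) by (apply Rinv_0_lt_compat; lra). lra. Qed.

Lemma vv0_pos : 0 <= vv 0.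
Proof.
  unfold vv. rewrite harm_1. simpl INR.
  assert (ln 2 <= 1). { replace 2 with (1+1) by lra. apply ln1p_le. lra. }
  replace (1+1) with 2 by lra. lra.
Qed.

Lemma vv_ge n : 0 <= vv n.
Proof.
  induction n. apply vv0_pos. pose proof (vv_incr n). lra.
Qed.

Lemma uu_ge n : 0 <= uu n.
Proof. pose proof (vv_ge n). pose proof (vv_le_uu n). lra. Qed.

Lemma uu_mono n m : (n <= m)%nat -> uu m <= uu n.
Proof. induction 1. lra. pose proof (uu_decr m). lra. Qed.
Lemma vv_mono n m : (n <= m)%nat -> vv n <= vv m.
Proof. induction 1. lra. pose proof (vv_incr m). lra. Qed.

Lemma gamma_bound (N : nat) :
  Rabs (harmonic (S N) - ln (INR (S N)) - euler_gamma) <= / INR (S N).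
Proof.
  assert (Hex : ex_finite_lim_seq uu).
  { apply ex_finite_lim_seq_decr with 0. apply uu_decr. apply uu_ge. }
  pose proof (Lim_seq_correct' _ Hex) as Hl.
  assert (Hg : euler_gamma = real (Lim_seq uu)).
  { unfold euler_gamma. rewrite <- Lim_seq_incr_1. reflexivity. }
  destruct Hex as [l Hlim]. rewrite (is_lim_seq_unique _ _ Hlim) in Hg, Hl. simpl in Hg.
  subst.
  assert (H1 : Rbar_le (euler_gamma) (uu N)).
  { apply is_lim_seq_le_loc with uu (fun _ => uu N); [|exact Hlim|apply is_lim_seq_const].
    exists N. intros n Hn. apply uu_mono; lia. }
  assert (H2 : Rbar_le (vv N) (euler_gamma)).
  { apply is_lim_seq_le_loc with (fun _ => vv N) uu; [|apply is_lim_seq_const|exact Hlim].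
    exists N. intros n Hn. pose proof (vv_mono N n Hn). pose proof (vv_le_uu n). lra. }
  simpl in H1, H2. unfold uu, vv in *. destruct (ln_step N).
  apply Rabs_le. lra.
Qed.

Definition gg (c : R) (k : nat) : R :=
  frac_part (/ c * (INR k + 1)) / (INR k * (INR k + 1)).
Definition hh (c : R) (k : nat) : R :=
  frac_part (/ c * (INR k + 2)) / ((INR k + 1) * (INR k + 2)).

Lemma plusR (a b : R) : plus a b = a + b.
Proof. reflexivity. Qed.

Lemma Int_part_small (x : R) : 0 < x < 1 -> Int_part x = 0%Z.
Proof.
  intros H. destruct (base_Int_part x) as [A B].
  assert (IZR (Int_part x) < 1) by lra. assert (-1 < IZR (Int_part x)) by lra.
  apply lt_IZR in H0. apply lt_IZR in H1. lia.
Qed.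

Lemma ident (c : R) (hc : 1 < c) (N : nat) :
  sum_n_m (fun n => fB c n / INR n) 1 (S N) =
  / c * harmonic (S N) + / c - sum_n_m (gg c) 1 N
  - frac_part (/ c * (INR (S N) + 1)) / INR (S N).
Proof.
  assert (ha : 0 < / c < 1).
  { split. apply Rinv_0_lt_compat; lra. rewrite <- Rinv_1. apply Rinv_lt_contravar; lra. }
  induction N.
  - rewrite sum_n_n, harm_1, sum_n_m_zero by lia. unfold fB, floorR, frac_part.
    simpl INR. rewrite Rmult_1_r, (Int_part_small (/ c)) by lra. unfold zero; simpl. field. lra.
  - rewrite sum_n_Sm by lia. rewrite (harm_S (S N)). rewrite (sum_n_Sm (gg c)) by lia.
    rewrite IHN. rewrite (S_INR (S N)). pose proof (INRS_pos N). set (t := INR (S N)) in *. unfold plus; simpl. unfold fB, gg, floorR, frac_part. rewrite (S_INR (S N)). fold t.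
    field. lra.
Qed.

Lemma gg_hh (c : R) N : sum_n_m (gg c) 1 (S N) = sum_n (hh c) N.
Proof.
  unfold sum_n. rewrite <- sum_n_m_S. apply sum_n_m_ext. intros k.
  unfold gg, hh. rewrite S_INR. replace (INR k + 1 + 1) with (INR k + 2) by lra. reflexivity.
Qed.

Lemma hh_bounds (c : R) k : 0 <= hh c k <= / ((INR k + 1) * (INR k + 2)).
Proof.
  unfold hh. pose proof (pos_INR k).
  assert (0 < (INR k + 1) * (INR k + 2)) by nra.
  pose proof (base_fp (/ c * (INR k + 2))) as [A B].
  unfold Rdiv. split.
  - apply Rmult_le_pos; [lra|left; apply Rinv_0_lt_compat; lra].
  - rewrite <- (Rmult_1_l (/ ((INR k + 1) * (INR k + 2)))) at 2. apply Rmult_le_compat_r; [left; apply Rinv_0_lt_compat; lra|lra].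
Qed.

Definition UU c n := sum_n (hh c) n + / (INR n + 2).

Lemma UU_decr c n : UU c (S n) <= UU c n.
Proof.
  unfold UU. rewrite sum_Sn. change (@plus _ ?x ?y) with (Rplus x y). rewrite S_INR.
  destruct (hh_bounds c (S n)) as [_ B]. rewrite S_INR in B. pose proof (pos_INR n).
  replace (/ (INR n + 1 + 2)) with (/ (INR n + 2) - / ((INR n + 1 + 1) * (INR n + 1 + 2))) by (field; lra).
  lra.
Qed.

Lemma P_incr c n : sum_n (hh c) n <= sum_n (hh c) (S n).
Proof. rewrite sum_Sn. change (@plus _ ?x ?y) with (Rplus x y). destruct (hh_bounds c (S n)). lra. Qed.

Lemma P_mono c n m : (n <= m)%nat -> sum_n (hh c) n <= sum_n (hh c) m.
Proof. induction 1. lra. pose proof (P_incr c m). lra. Qed.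
Lemma UU_mono c n m : (n <= m)%nat -> UU c m <= UU c n.
Proof. induction 1. lra. pose proof (UU_decr c m). lra. Qed.

Lemma P_le_UU c n N : sum_n (hh c) n <= UU c N.
Proof.
  destruct (le_lt_dec n N).
  - pose proof (P_mono c n N l). unfold UU. pose proof (pos_INR N).
    assert (0 < / (INR N + 2)) by (apply Rinv_0_lt_compat; lra). lra.
  - assert (sum_n (hh c) n <= UU c n).
    { unfold UU. pose proof (pos_INR n). assert (0 < / (INR n + 2)) by (apply Rinv_0_lt_compat; lra). lra. }
    pose proof (UU_mono c N n ltac:(lia)). lra.
Qed.

Lemma series_bounds c N :
  sum_n (hh c) N <= frac_series c <= UU c N.
Proof.
  assert (Hex : ex_finite_lim_seq (sum_n (hh c))).
  { apply ex_finite_lim_seq_incr with (UU c 0). apply P_incr. intros; apply P_le_UU. }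
  pose proof (Lim_seq_correct' _ Hex) as Hl.
  change (frac_series c) with (Series (hh c)). unfold Series. destruct Hex as [l Hlim].
  rewrite (is_lim_seq_unique _ _ Hlim) in Hl |- *. simpl.
  split.
  - apply (is_lim_seq_le_loc (fun _ => sum_n (hh c) N) (sum_n (hh c)) (sum_n (hh c) N) l);
      [exists N; intros n Hn; apply P_mono; lia| apply is_lim_seq_const | exact Hlim].
  - apply (is_lim_seq_le_loc (sum_n (hh c)) (fun _ => UU c N) l (UU c N));
      [exists N; intros n Hn; apply P_le_UU| exact Hlim | apply is_lim_seq_const].
Qed.

Lemma tail_bound c N : Rabs (frac_series c - sum_n_m (gg c) 1 N) <= / (INR N + 1).
Proof.
  destruct N.
  - rewrite sum_n_m_zero by lia. unfold zero; simpl.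
    destruct (series_bounds c 0) as [A B]. destruct (hh_bounds c 0) as [C _].
    unfold UU, sum_n in *. rewrite sum_n_n in *. destruct (hh_bounds c 0) as [_ D].
    simpl INR in *. apply Rabs_le. replace (/ ((0+1)*(0+2))) with (/2) in D by (field).
    replace (/ (0+2)) with (/2) in B by field. replace (/(0+1)) with 1 by field. lra.
  - rewrite gg_hh. destruct (series_bounds c N) as [A B]. unfold UU in B.
    rewrite S_INR. replace (INR N + 1 + 1) with (INR N + 2) by ring.
    pose proof (pos_INR N). assert (0 < / (INR N + 2)) by (apply Rinv_0_lt_compat; lra).
    apply Rabs_le. lra.
Qed.

Lemma abs_bet x e : Rabs x <= e -> - e <= x <= e.
Proof. intros H. pose proof (Rle_abs x). pose proof (Rle_abs (-x)). rewrite Rabs_Ropp in *. lra. Qed.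

Theorem lemma11 (c : R) (hc1 : 1 < c) (hirr : irrational c) :
  exists (K : R) (M : nat), forall m : nat, (M <= m)%nat -> (1 <= m)%nat ->
    Rabs (lhs_sum c m
          - (/ c + / c * (ln (INR m) + ln c + euler_gamma) - frac_series c))
      <= K / INR m.
Proof.
  exists 4, 1%nat. intros m _ Hm.
  assert (ha : 0 < / c < 1).
  { split. apply Rinv_0_lt_compat; lra. rewrite <- Rinv_1. apply Rinv_lt_contravar; lra. }
  assert (Hm0 : 1 <= INR m) by (apply (le_INR 1); lia).
  set (z := Int_part (INR m * c)).
  destruct (base_Int_part (INR m * c)) as [B1 B2]. fold z in B1, B2.
  assert (Hmc : INR m <= INR m * c) by nra.
  assert (Hz : (Z.of_nat m <= z)%Z).
  { assert (IZR (Z.of_nat m) - 1 < IZR z) by (rewrite <- INR_IZR_INZ; lra).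
    rewrite <- minus_IZR in H. apply lt_IZR in H. lia. }
  unfold lhs_sum. fold z. clearbody z.
  assert (HX : INR (Z.to_nat z) = IZR z) by (rewrite INR_IZR_INZ, Z2Nat.id; [reflexivity|]; lia).
  assert (HmX : (m <= Z.to_nat z)%nat) by lia.
  destruct (Z.to_nat z) as [|N]; [lia|].
  rewrite ident by lra.
  pose proof (INRS_pos N) as HNp.
  assert (HmN : INR m <= INR (S N)) by (apply le_INR; lia).
  assert (Hinv : / INR (S N) <= / INR m) by (apply Rinv_le_contravar; lra).
  pose proof (gamma_bound N) as G. apply abs_bet in G.
  pose proof (tail_bound c N) as T. apply abs_bet in T.
  rewrite <- S_INR in T.
  destruct (ln_step N) as [L1 L2].
  assert (Hl1 : ln (INR (S N)) <= ln (INR m * c)) by (apply ln_le; lra).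
  assert (Hl2 : ln (INR m * c) <= ln (INR (S N) + 1)) by (apply ln_le; lra).
  rewrite ln_mult in Hl1, Hl2 by lra.
  pose proof (base_fp (/ c * (INR (S N) + 1))) as [F1 F2].
  assert (HF : 0 <= frac_part (/ c * (INR (S N) + 1)) / INR (S N) <= / INR (S N)).
  { unfold Rdiv. assert (0 < / INR (S N)) by (apply Rinv_0_lt_compat; lra). split; nra. }
  set (d1 := harmonic (S N) - ln (INR (S N)) - euler_gamma) in G.
  assert (E : lhs_sum c m = lhs_sum c m) by reflexivity.
  set (e := / INR (S N)) in *.
  assert (Hd1 : - e <= / c * d1 <= e) by nra.
  set (d2 := ln (INR m) + ln c - ln (INR (S N))).
  assert (Hd2 : 0 <= / c * d2 <= e) by (unfold d2; nra).
  unfold Rdiv. apply Rabs_le.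
  assert (Eq : / c * harmonic (S N) + / c - sum_n_m (gg c) 1 N -
    frac_part (/ c * (INR (S N) + 1)) * / INR (S N) -
    (/ c + / c * (ln (INR m) + ln c + euler_gamma) - frac_series c)
    = / c * d1 - / c * d2 + (frac_series c - sum_n_m (gg c) 1 N) - frac_part (/ c * (INR (S N) + 1)) * e)
    by (unfold d1, d2, e; ring).
  assert (0 < / INR m) by (apply Rinv_0_lt_compat; lra). rewrite Eq. change (frac_part (/ c * (INR (S N) + 1)) / INR (S N)) with (frac_part (/ c * (INR (S N) + 1)) * e) in HF. clearbody d1 d2 e. lra.
Qed.
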